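(* Let $k\geq 2$ be an integer. If $G$ is a $k$-leaf power, then $\mathrm{box}(G)\leq k-1$.
   Context: A finite graph $G$ is a $k$-leaf power if there is a tree $T$ and a bijection between $V(G)$ and the set of leaves of $T$ such that two vertices of $G$ are adjacent iff the corresponding leaves are at distance at most $k$ in $T$. The boxicity $\mathrm{box}(G)$ is the minimum integer $t$ such that $G$ is the intersection graph of axis-parallel $t$-dimensional boxes (Cartesian products of $t$ closed real intervals), i.e. there is a map $f$ from $V(G)$ to such boxes with $(u,v)\in E(G)\iff f(u)\cap f(v)\neq\emptyset$ for distinct $u,v$. *)

(* Defs.v *)
From mathcomp Require Import all_boot.
From Stdlib Require Import Reals.
Set Implicit Arguments. Unset Strict Implicit. Unset Printing Implicit Defensive.

Definition simple_graph (V : finType) (e : rel V) : Prop :=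
  symmetric e /\ irreflexive e.

Definition is_tree (V : finType) (t : rel V) : Prop :=
  simple_graph t /\ 0 < #|V| /\
  (forall x y : V, connect t x y) /\
  (forall c : seq V, ucycle t c -> size c < 3).

(* Leaves of a tree: vertices of degree at most 1 (for trees on >= 2
   vertices these are exactly the degree-1 vertices). *)
Definition is_leaf (V : finType) (t : rel V) (v : V) : Prop :=
  #|[pred w | t v w]| <= 1.

Definition dist_le (V : finType) (t : rel V) (k : nat) (x y : V) : Prop :=
  exists p : seq V, [/\ path t x p, last x p = y & size p <= k].

Definition leaf_power (k : nat) (T : finType) (g : rel T) : Prop :=
  exists (V : finType) (t : rel V) (f : T -> V),
    [/\ is_tree t,
        injective f,
        (forall v : V, is_leaf t v <-> exists x : T, f x = v) &
        (forall x y : T, x <> y -> (g x y <-> dist_le t k (f x) (f y)))].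

Definition box_rep (T : finType) (g : rel T) (d : nat) : Prop :=
  exists b : T -> 'I_d -> (R * R),
    (forall x i, (fst (b x i) <= snd (b x i))%R) /\
    (forall x y : T, x <> y ->
       (g x y <-> exists p : 'I_d -> R, forall i,
          (fst (b x i) <= p i <= snd (b x i))%R /\
          (fst (b y i) <= p i <= snd (b y i))%R)).

Definition boxicity_le (T : finType) (g : rel T) (t : nat) : Prop :=
  exists d, d <= t /\ box_rep g d.

(* Main.v *)
Require Import Defs.
From mathcomp Require Import all_boot.
From Stdlib Require Import Reals.
From mathcomp Require Import zify.
From Stdlib Require Import Lra.
Set Implicit Arguments. Unset Strict Implicit. Unset Printing Implicit Defensive.

Fixpoint lexle (x y : seq nat) : bool :=
  match x, y with
  | [::], _ => true
  | _ :: _, [::] => false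
  | a :: x', b :: y' => (a < b) || ((a == b) && lexle x' y')
  end.

Lemma lexle_refl x : lexle x x.
Proof. by elim: x => //= a x ->; rewrite eqxx orbT. Qed.

Lemma lexle_trans x y z : lexle x y -> lexle y z -> lexle x z.
Proof.
elim: x y z => [|a x IH] [|b y] [|c z] //=.
case/orP=> [ab|/andP[/eqP<- xy]]; case/orP=> [bc|/andP[/eqP<- yz]].
- by rewrite (ltn_trans ab bc).
- by rewrite ab.
- by rewrite bc.
- by rewrite (IH _ _ xy yz) eqxx orbT.
Qed.

Lemma lexle_total x y : lexle x y || lexle y x.
Proof.
elim: x y => [|a x IH] [|b y] //=.
case: (ltngtP a b) => //= ->; rewrite eqxx /=; exact: IH.
Qed.

Lemma lexle_take_sent N q n m : all (fun z => z < N) q ->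
  lexle (take n q) (take m q ++ [:: N]).
Proof.
elim: q n m => [|c q IH] [|n] [|m] //=.
- by move=> /andP[cN _]; rewrite cN.
- by move=> /andP[_ /IH ->]; rewrite eqxx orbT.
Qed.

Lemma lex_core N p al be s' u' n m :
  all (fun z => z < N) (p ++ al :: s') -> all (fun z => z < N) (p ++ be :: u') ->
  al < be ->
  lexle (take n (p ++ al :: s')) (take m (p ++ be :: u') ++ [:: N]) /\
  lexle (take n (p ++ be :: u')) (take m (p ++ al :: s') ++ [:: N]) =
    ~~ ((size p < m) && (size p < n)).
Proof.
elim: p n m => [|c p IH] [|n] [|m] //=; rewrite ?andbF ?andbT //.
- by move=> /andP[-> _] /andP[-> _] _.
- move=> _ _ ab; rewrite ab; split=> //.
  by rewrite ltnNge (ltnW ab) (gtn_eqF ab).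
- by move=> /andP[-> _] _ _.
- move=> /andP[_ h1] /andP[_ h2] ab; have [-> ->] := IH n m h1 h2 ab.
  by rewrite ltnn eqxx /= !ltnS.
Qed.

Definition rho (E : seq (seq nat)) (s : seq nat) := count (fun e => ~~ lexle s e) E.

Lemma rho_mono E x y : lexle x y -> rho E x <= rho E y.
Proof.
move=> xy; rewrite /rho; apply: sub_count => e /=.
by apply: contra => ye; exact: lexle_trans xy ye.
Qed.

Lemma rho_strict E x y : y \in E -> ~~ lexle x y -> rho E y < rho E x.
Proof.
move=> yE nxy; have yx : lexle y x by have := lexle_total x y; rewrite (negbTE nxy).
have sub : forall e, ~~ lexle y e -> ~~ lexle x e.
  by move=> e; apply: contra => xe; exact: lexle_trans yx xe.
rewrite /rho; elim: E yE => [|e E IH] //=; rewrite inE => /orP[/eqP<-|eE].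
- rewrite lexle_refl nxy /= add0n add1n ltnS; exact: sub_count.
- move: (IH eE) (sub e); case: (lexle y e); case: (lexle x e) => //= h1 h2; try lia.
Qed.

Lemma in_split (T : eqType) (x : T) s : x \in s -> exists q w, s = q ++ x :: w.
Proof. by case/splitPr => q w; exists q, w. Qed.

Lemma seq_split (T : eqType) (s1 s2 : seq T) :
  (exists w, s2 = s1 ++ w) \/ (exists w, s1 = s2 ++ w) \/
  exists p a b s s', [/\ s1 = p ++ a :: s, s2 = p ++ b :: s' & a != b].
Proof.
elim: s1 s2 => [|x s1 IH] [|y s2].
- by left; exists [::].
- by left; exists (y :: s2).
- by right; left; exists (x :: s1).
- case: (x =P y) => [<-|/eqP ne].
    case: (IH s2) => [[w ->]|[[w ->]|[p [a [b [s [s' [-> -> ab]]]]]]]].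
    + by left; exists w.
    + by right; left; exists w.
    + by right; right; exists (x :: p), a, b, s, s'.
  by right; right; exists [::], x, y, s1, s2.
Qed.

Fixpoint lcp (T : eqType) (s1 s2 : seq T) : nat :=
  match s1, s2 with
  | x :: s1', y :: s2' => if x == y then (lcp s1' s2').+1 else 0
  | _, _ => 0
  end.

Lemma lcp_rcons1 (T : eqType) (s q : seq T) c : lcp s q <= lcp s (rcons q c).
Proof. by elim: s q => [|x s IH] [|y q] //=; case: ifP => // _; rewrite ltnS IH. Qed.

Lemma lcp_rcons2 (T : eqType) (s q : seq T) c : lcp s (rcons q c) <= (lcp s q).+1.
Proof.
elim: s q => [|x s IH] [|y q] //=; first by case: ifP => //; case: s {IH}.
by case: ifP => // _; rewrite ltnS IH.
Qed.

Lemma lcp_refl (T : eqType) (s : seq T) : lcp s s = size s.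
Proof. by elim: s => //= x s ->; rewrite eqxx. Qed.

Lemma lcp_cat (T : eqType) (p : seq T) a b s s' :
  a != b -> lcp (p ++ a :: s) (p ++ b :: s') = size p.
Proof. by move=> ab; elim: p => /= [|x p ->]; rewrite ?eqxx // (negbTE ab). Qed.

Section TreeS.
Variables (V : finType) (t : rel V) (r : V).
Hypothesis tsym : symmetric t.
Hypothesis tirr : irreflexive t.
Hypothesis tcon : forall v, connect t r v.

Fixpoint reach n : {set V} :=
  if n is n'.+1 then reach n' :|: [set v | [exists w in reach n', t w v]]
  else [set r].

Lemma reach_path p : path t r p -> last r p \in reach (size p).
Proof.
elim/last_ind: p => [|q c IH]; first by rewrite /= inE.
rewrite rcons_path last_rcons size_rcons => /andP[/IH h e].
by rewrite /= !inE; apply/orP; right; apply/existsP; exists (last r q); rewrite h.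
Qed.

Lemma exreach v : exists n, v \in reach n.
Proof. by have /connectP[p pp ->] := tcon v; exists (size p); exact: reach_path. Qed.

Definition dep v := ex_minn (exreach v).

Lemma dep_reach v : v \in reach (dep v).
Proof. by rewrite /dep; case: ex_minnP. Qed.

Lemma dep_min v n : v \in reach n -> dep v <= n.
Proof. by rewrite /dep; case: ex_minnP => m _ h /h. Qed.

Lemma dep_r : dep r = 0.
Proof. by apply/eqP; rewrite -leqn0; apply: dep_min; rewrite /= inE. Qed.

Lemma par_ex v : v != r -> exists w, t v w && (dep w < dep v).
Proof.
move=> vr; have := dep_reach v; case E: (dep v) => [|n].
  by rewrite /= inE (negbTE vr).
rewrite /= inE => /orP[/dep_min|]; first by rewrite E ltnn.
rewrite inE => /existsP[w /andP[wn twv]]; exists w.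
by rewrite tsym twv /= ltnS dep_min.
Qed.

Definition par v := if v == r then r else odflt r [pick w | t v w && (dep w < dep v)].

Lemma par_spec v : v != r -> t v (par v) && (dep (par v) < dep v).
Proof.
move=> vr; rewrite /par (negbTE vr); case: pickP => //= h.
by have [w] := par_ex vr; rewrite h.
Qed.

Lemma par_r : par r = r.
Proof. by rewrite /par eqxx. Qed.

Fixpoint Pf n v : seq V :=
  if n is n'.+1 then (if v == r then [:: r] else rcons (Pf n' (par v)) v) else [:: v].

Definition P v := Pf (dep v).+1 v.

Lemma Pf_stable n m v : dep v < n -> dep v < m -> Pf n v = Pf m v.
Proof.
elim: n m v => [|n IH] [|m] v //= hn hm; case: ifP => // vr.
have := par_spec (negbT vr); case/andP=> _ lt.
congr rcons; apply: IH; lia.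
Qed.

Lemma P_r : P r = [:: r].
Proof. by rewrite /P /= eqxx. Qed.

Lemma P_par v : v != r -> P v = rcons (P (par v)) v.
Proof.
move=> vr; rewrite {1}/P /= (negbTE vr); congr rcons.
have := par_spec vr; case/andP=> _ lt.
rewrite /P; apply: Pf_stable => //; lia.
Qed.

Lemma P_ind (Q : V -> Prop) : Q r -> (forall v, v != r -> Q (par v) -> Q v) -> forall v, Q v.
Proof.
move=> Qr Qs v; move: {2}(dep v) (leqnn (dep v)) => n; elim: n v => [|n IH] v hv.
  have : dep v == 0 by rewrite -leqn0.
  case: (v =P r) => [->//|/eqP vr _]; have := par_spec vr; lia.
case: (v =P r) => [->//|/eqP vr]; apply: Qs => //; apply: IH.
have := par_spec vr; lia.
Qed.

Lemma P_rcons v : exists q, P v = rcons q v.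
Proof.
elim/P_ind: v => [|v vr _]; first by exists [::]; rewrite P_r.
by exists (P (par v)); rewrite P_par.
Qed.

Lemma P_inj u v : P u = P v -> u = v.
Proof.
have [q ->] := P_rcons u; have [q' ->] := P_rcons v.
by move/(congr1 (last r)); rewrite !last_rcons.
Qed.

Lemma P_head v : exists s, P v = r :: s.
Proof.
elim/P_ind: v => [|v vr [s Es]]; first by exists [::]; rewrite P_r.
by exists (rcons s v); rewrite (P_par vr) Es.
Qed.

Lemma P_path v : path t r (behead (P v)).
Proof.
elim/P_ind: v => [|v vr]; first by rewrite P_r.
have [s Es] := P_head (par v).
rewrite (P_par vr) Es /= => h; rewrite rcons_path h /=.
have [q Eq] := P_rcons (par v).
have : last r s = last r (r :: s) by [].
rewrite -Es Eq last_rcons => ->; rewrite tsym; by case/andP: (par_spec vr).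
Qed.

Lemma P_prefix v q c w : P v = q ++ c :: w -> P c = rcons q c.
Proof.
elim/P_ind: v q c w => [|v vr IH] q c w.
  rewrite P_r; case: q => [|a q] /=; first by case=> <- _; rewrite P_r.
  by case=> _; case: q.
rewrite (P_par vr); case/lastP: w => [|w d].
  by rewrite cats1 => /rcons_inj[<- <-]; rewrite (P_par vr).
rewrite -rcons_cons -rcons_cat => /rcons_inj[/IH].
by [].
Qed.

Lemma P_size_par v : v != r -> size (P v) = (size (P (par v))).+1.
Proof. by move=> vr; rewrite P_par // size_rcons. Qed.

Lemma P_uniq v : uniq (P v).
Proof.
elim/P_ind: v => [|v vr IH]; first by rewrite P_r.
rewrite P_par // rcons_uniq IH andbT; apply/negP => /in_split [q [w E]].
have := P_prefix E; move=> /(congr1 size).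
rewrite (P_par vr) !size_rcons E size_cat /=; lia.
Qed.


Lemma P_last v : last r (P v) = v.
Proof. by have [q ->] := P_rcons v; rewrite last_rcons. Qed.

Lemma P_path_cat v q w : P v = q ++ w -> q != [::] -> path t (last r q) w.
Proof.
move=> E qn; have [s Es] := P_head v; have := P_path v; rewrite Es /=.
case: q E qn => [|a q] //; rewrite Es /= => -[<- Es'] _ h.
by move: h; rewrite Es' cat_path => /andP[].
Qed.

Lemma P_nil v : P v != [::].
Proof. by have [s ->] := P_head v. Qed.

Lemma ancestor_case (tacyc : forall c : seq V, ucycle t c -> size c < 3) u v w :
  P v = P u ++ w -> t u v -> u = par v.
Proof.
move=> E tuv; case: w E => [|c [|c' w']] E.
- by move: E; rewrite cats0 => /P_inj eq; move: tuv; rewrite eq tirr.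
- have cv : c = v by have := P_last v; rewrite E last_cat /=.
  subst c; case: (v =P r) => [vr|/eqP vr].
    have := congr1 size E; rewrite vr P_r size_cat /=.
    by have := P_nil u; case: (P u) => //= a l _ h; exfalso; lia.
  by move: E; rewrite (P_par vr) cats1 => /rcons_inj[/P_inj].
- exfalso; suff /tacyc : ucycle t (u :: c :: c' :: w') by [].
  apply/andP; split.
    rewrite /= rcons_path; have := P_path_cat E (P_nil u); rewrite P_last /= => /and3P[-> -> ->] /=.
    have : last u (c :: c' :: w') = v by rewrite -(P_last v) E last_cat P_last.
    by move=> /= ->; rewrite tsym.
  have := P_uniq v; rewrite E cat_uniq => /and3P[_ hn hu].
  rewrite /= in hu *; rewrite hu andbT.
  have uin : u \in P u by have [q ->] := P_rcons u; rewrite mem_rcons inE eqxx.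
  apply/negP => hin; move/hasP: hn; apply; exists u => //.
Qed.

Lemma catI (T : Type) (p q1 q2 : seq T) : p ++ q1 = p ++ q2 -> q1 = q2.
Proof. by elim: p => //= x p IH [] /IH. Qed.

Lemma P_head_mem v : r \in P v.
Proof. by have [s ->] := P_head v; rewrite inE eqxx. Qed.

Lemma cross_case (tacyc : forall c : seq V, ucycle t c -> size c < 3) u v p a b s s' :
  P u = p ++ a :: s -> P v = p ++ b :: s' -> a != b -> t u v -> False.
Proof.
move=> Eu Ev ab tuv.
have pn : p != [::].
  apply/negP => /eqP p0; move: Eu Ev; rewrite p0 /=.
  have [x ->] := P_head u; have [y ->] := P_head v.
  by move=> [ea _] [eb _]; rewrite -ea -eb eqxx in ab.
have zp : last r p \in p by case: p pn {Eu Ev} => // x p' _; exact: (mem_last x p').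
set z := last r p in zp *.
have pu : path t z (a :: s) := P_path_cat Eu pn.
have pv : path t z (b :: s') := P_path_cat Ev pn.
have lu : last z (a :: s) = u by rewrite -(P_last u) Eu last_cat.
have lv : last z (b :: s') = v by rewrite -(P_last v) Ev last_cat.
have uu := P_uniq u; have uv := P_uniq v.
rewrite Eu cat_uniq in uu; case/and3P: uu => _ hu1 uas.
rewrite Ev cat_uniq in uv; case/and3P: uv => _ hv1 ubs.
have zna : z \notin a :: s by apply/negP => zin; move/hasP: hu1; apply; exists z.
have znb : z \notin b :: s' by apply/negP => zin; move/hasP: hv1; apply; exists z.
have disj : forall w, w \in a :: s -> w \in b :: s' -> False.
  move=> w /in_split[q1 [q2 E1]] /in_split[q3 [q4 E3]].
  have h1 : P w = rcons (p ++ q1) w by apply: (P_prefix (v:=u) (w:=q2)); rewrite Eu E1 catA.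
  have h3 : P w = rcons (p ++ q3) w by apply: (P_prefix (v:=v) (w:=q4)); rewrite Ev E3 catA.
  have := rcons_inj (etrans (esym h1) h3); case=> /catI q13; subst q3.
  case: q1 E1 E3 {h1 h3} => [|x q1] /= [ea _] [eb _].
    by rewrite ea eb eqxx in ab.
  by rewrite ea eb eqxx in ab.
suff /tacyc : ucycle t (z :: (a :: s) ++ rev (b :: s')).
  by rewrite /= size_cat size_rev /= => h; lia.
apply/andP; split.
  rewrite [cycle _ _]/= rcons_cat cat_path; move: pu => /= /andP[-> ->] /=; rewrite (lu : last a s = u).
  rewrite -rev_cons (lastI z (b :: s')) rev_rcons lv /= tuv /= -{1}lv rev_path.
  rewrite (@eq_path _ _ t) // => x y /=; exact: tsym.
rewrite cons_uniq mem_cat mem_rev negb_or zna znb cat_uniq uas rev_uniq ubs /= andbT.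
apply/hasPn => w; rewrite mem_rev => wb; apply/negP => wa; exact: disj wa wb.
Qed.

Lemma edge_par (tacyc : forall c : seq V, ucycle t c -> size c < 3) u v :
  t u v -> u = par v \/ v = par u.
Proof.
move=> tuv; case: (seq_split (P u) (P v)) => [[w E]|[[w E]|[p [a [b [s [s' [Eu Ev ab]]]]]]]].
- by left; apply: (@ancestor_case tacyc u v w E tuv).
- by right; apply: (@ancestor_case tacyc v u w E); rewrite tsym.
- by exfalso; exact: (@cross_case tacyc u v p a b s s' Eu Ev ab tuv).
Qed.

Lemma edge_P (tacyc : forall c : seq V, ucycle t c -> size c < 3) u v :
  t u v -> P v = rcons (P u) v \/ P u = rcons (P v) u.
Proof.
move=> tuv; case: (edge_par tacyc tuv) => e.
  left; case: (v =P r) => [vr|/eqP vr]; last by rewrite (P_par vr) -e.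
  by move: tuv; rewrite e vr par_r tirr.
right; case: (u =P r) => [ur|/eqP ur]; last by rewrite (P_par ur) -e.
by move: tuv; rewrite e ur par_r tirr.
Qed.

Lemma walk_lb (tacyc : forall c : seq V, ucycle t c -> size c < 3) x p :
  path t x p ->
  size (P x) + size (P (last x p)) <= 2 * lcp (P x) (P (last x p)) + size p.
Proof.
elim/last_ind: p => [|q c IH].
  by move=> _ /=; rewrite lcp_refl addn0 mul2n -addnn.
rewrite rcons_path last_rcons size_rcons => /andP[/IH h e].
case: (edge_P tacyc e) => E.
  rewrite E size_rcons.
  apply: leq_trans _ (leq_add (leq_mul (leqnn 2) (lcp_rcons1 _ _ c)) (leqnn _)).
  lia.
move: h; rewrite E size_rcons => h.
have := leq_trans h (leq_add (leq_mul (leqnn 2) (lcp_rcons2 (P x) (P c) (last x q))) (leqnn _)).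
lia.
Qed.

Lemma dist_down v q w : P v = q ++ w -> q != [::] -> dist_le t (size w) (last r q) v.
Proof.
move=> E qn; exists w; split => //; first exact: P_path_cat E qn.
by rewrite -(P_last v) E last_cat.
Qed.

Lemma distle_sym n x y : dist_le t n x y -> dist_le t n y x.
Proof.
case=> p [pp lp sp]; exists (rev (belast x p)); split.
- rewrite -lp rev_path (@eq_path _ _ t) // => a b /=; exact: tsym.
- by case: p {pp sp} lp => [|a p'] //= <-; rewrite rev_cons last_rcons.
- by rewrite size_rev size_belast.
Qed.

Lemma distle_trans n m x y z : dist_le t n x y -> dist_le t m y z -> dist_le t (n + m) x z.
Proof.
case=> p [pp lp sp] [q [pq lq sq]]; exists (p ++ q); split.
- by rewrite cat_path pp lp pq.
- by rewrite last_cat lp.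
- by rewrite size_cat; lia.
Qed.

Lemma internal_nonleaf v q z c w : P v = q ++ z :: c :: w ->
  (z = r -> 1 < #|[pred y | t r y]|) -> 1 < #|[pred y | t z y]|.
Proof.
move=> E hr.
have Pc : P c = rcons (q ++ [:: z]) c by apply: (P_prefix (v := v) (w := w)); rewrite E -catA.
have Pz : P z = rcons q z by apply: (P_prefix (v := v) (w := c :: w)).
have cr : c != r.
  apply/eqP => cr; move: Pc; rewrite cr P_r => /(congr1 size).
  by rewrite size_rcons size_cat /=; lia.
have pc : par c = z.
  by apply: P_inj; move: Pc; rewrite (P_par cr) Pz cats1 => /rcons_inj[].
have tzc : t z c by rewrite tsym -pc; case/andP: (par_spec cr).
case: (z =P r) => [zr|/eqP zr]; first by rewrite zr; apply: hr.
apply/card_gt1P; exists c, (par z); split => //.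
  by rewrite inE; case/andP: (par_spec zr).
apply/eqP => cpz; move: Pc; rewrite cpz (P_par zr) in Pz *.
move=> /(congr1 size); rewrite size_rcons size_cat /=.
by move/(congr1 size): Pz; rewrite !size_rcons; lia.
Qed.
End TreeS.

Definition Tk (a : nat) (s : seq nat) := take (maxn 1 (size s - a)) s.

Lemma keys_core N k p al be s' u' : 2 <= k -> 0 < size p ->
  all (fun z => z < N) (p ++ al :: s') -> all (fun z => z < N) (p ++ be :: u') ->
  al < be -> (size u' = 0 -> size s' = 0) ->
  ((size s').+1 + (size u').+1 <= k) <->
  (forall i : 'I_(k.-1),
     lexle (Tk i.+1 (p ++ al :: s')) (Tk (k.-1 - i.+1) (p ++ be :: u') ++ [:: N]) &&
     lexle (Tk i.+1 (p ++ be :: u')) (Tk (k.-1 - i.+1) (p ++ al :: s') ++ [:: N])).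
Proof.
move=> k2 p0 hs hu ab lf.
have E : forall i : 'I_(k.-1),
     lexle (Tk i.+1 (p ++ al :: s')) (Tk (k.-1 - i.+1) (p ++ be :: u') ++ [:: N]) &&
     lexle (Tk i.+1 (p ++ be :: u')) (Tk (k.-1 - i.+1) (p ++ al :: s') ++ [:: N]) =
     ~~ ((size p < maxn 1 (size p + (size s').+1 - (k.-1 - i.+1))) &&
         (size p < maxn 1 (size p + (size u').+1 - i.+1))).
  move=> i; rewrite /Tk !size_cat /=.
  have [-> _] := @lex_core N p al be s' u' (maxn 1 (size p + (size s').+1 - i.+1))
                  (maxn 1 (size p + (size u').+1 - (k.-1 - i.+1))) hs hu ab.
  by have [_ ->] := @lex_core N p al be s' u' (maxn 1 (size p + (size u').+1 - i.+1))
                  (maxn 1 (size p + (size s').+1 - (k.-1 - i.+1))) hs hu ab.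
split.
  move=> h i; rewrite E; apply/negP => /andP[h1 h2].
  have := ltn_ord i; move: h1 h2 h; lia.
move=> h; rewrite leqNgt; apply/negP => hk.
have u1 : 0 < size u' by case: (size u') lf hk => // /(_ erefl) ->; lia.
have io : minn (k - 2) (size u' - 1) < k.-1 by lia.
have := h (Ordinal io); rewrite E /=; lia.
Qed.

Lemma box_iff d (lx rx ly ry : 'I_d -> R) :
  (forall i, lx i <= rx i)%R -> (forall i, ly i <= ry i)%R ->
  ((exists p : 'I_d -> R, forall i, (lx i <= p i <= rx i)%R /\ (ly i <= p i <= ry i)%R) <->
   (forall i, lx i <= ry i /\ ly i <= rx i)%R).
Proof.
move=> hx hy; split.
  by case=> p hp i; have := hp i; lra.
move=> h; exists (fun i => Rmax (lx i) (ly i)) => i.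
have := h i; have := hx i; have := hy i; have := Rmax_l (lx i) (ly i);
have := Rmax_r (lx i) (ly i); move=> *; split; split=> //; apply: Rmax_lub; lra.
Qed.

Lemma all_leaf_adj (V : finType) (t : rel V) : symmetric t -> (forall x y, connect t x y) ->
  (forall v, #|[pred w | t v w]| <= 1) -> forall u v, u != v -> t u v.
Proof.
move=> tsym tcon lf u v; have /connectP[p pp ->] := tcon u v.
case: (shortenP pp) => p' pp' up' _ {pp}.
case: p' pp' up' => [|a [|b p'']] /=; first by move=> _ _ /eqP.
  by move=> /andP[].
move=> /and3P[tua tab _] /andP[ua /andP[ab _]] _.
exfalso; have := lf a; rewrite leqNgt => /negP; apply; apply/card_gt1P; exists u, b; split.
- by rewrite inE tsym.
- by rewrite inE.
- by apply/negP => /eqP ub; move: ua; rewrite ub !inE eqxx orbT.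
Qed.

Lemma distle_mono (V : finType) (t : rel V) n m x y : n <= m -> dist_le t n x y -> dist_le t m x y.
Proof. by move=> nm [p [pp lp sp]]; exists p; split => //; apply: leq_trans sp nm. Qed.

Unset Implicit Arguments.

Theorem corollary1 (k : nat) (T : finType) (g : rel T) :
  2 <= k -> simple_graph g -> leaf_power k g -> boxicity_le g (k - 1).
Proof.
move=> k2 [gsym girr] [V [t [f [[[tsym tirr] [_ [tcon tacyc]]] finj fleaf gdist]]]].
have lfx : forall x, #|[pred w | t (f x) w]| <= 1.
  by move=> x; apply: (proj2 (fleaf (f x))); exists x.
have fne : forall x y, x != y -> f x != f y.
  by move=> x y; apply: contra => /eqP /finj ->.
case: (boolP [exists v, ~~ (#|[pred w | t v w]| <= 1)]) => [/existsP[r rnl]|nall]; last first.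
  have lf : forall v, #|[pred w | t v w]| <= 1.
    by move=> v; move/existsPn: nall => /(_ v); rewrite negbK.
  have adj := all_leaf_adj tsym tcon lf.
  exists (k - 1); split => //; exists (fun _ _ => (0%R, 0%R)); split => [x i|x y xy].
    exact: Rle_refl.
  split => _; first by exists (fun _ => 0%R) => i /=; lra.
  apply/(gdist _ _ xy); exists [:: f y]; split => //=; last lia.
  by rewrite adj // fne //; apply/eqP.
have tcon' : forall v, connect t r v := fun v => tcon r v.
have hr : r = r -> 1 < #|[pred y | t r y]| by move=> _; rewrite ltnNge.
pose kap := fun v : V => if #|[pred w | t v w]| <= 1 then nat_of_ord (enum_rank v)
                         else #|V| + nat_of_ord (enum_rank v).
have rk : forall v : V, nat_of_ord (enum_rank v) < #|V| by move=> v; exact: ltn_ord.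
have kapN : forall v, kap v < 2 * #|V|.
  by move=> v; rewrite /kap; have := rk v; case: ifP => _; lia.
have kapinj : injective kap.
  move=> u v; rewrite /kap; have := rk v; have := rk u.
  case: ifP => _; case: ifP => _ hu hv; try lia.
    by move/ord_inj/enum_rank_inj.
  by move/addnI/ord_inj/enum_rank_inj.
have kapleaf : forall v, kap v < #|V| -> #|[pred w | t v w]| <= 1.
  by move=> v; rewrite /kap; case: ifP => // _; lia.
pose N := 2 * #|V|.
pose key := fun x => map kap (P tcon' (f x)).
have keyN : forall x, all (fun z => z < N) (key x).
  by move=> x; rewrite all_map; apply/allP => v _ /=; exact: kapN.
pose L := fun x (i : 'I_(k.-1)) => Tk i.+1 (key x).
pose Rr := fun x (i : 'I_(k.-1)) => Tk (k.-1 - i.+1) (key x) ++ [:: N].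
pose E := [seq L z.1 z.2 | z <- enum {: T * 'I_(k.-1)}] ++
          [seq Rr z.1 z.2 | z <- enum {: T * 'I_(k.-1)}].
have LE : forall x i, L x i \in E.
  by move=> x i; rewrite mem_cat; apply/orP; left; apply/mapP; exists (x, i); rewrite ?mem_enum.
have RE : forall x i, Rr x i \in E.
  by move=> x i; rewrite mem_cat; apply/orP; right; apply/mapP; exists (x, i); rewrite ?mem_enum.
have rhoE : forall e1 e2, e2 \in E -> lexle e1 e2 = (rho E e1 <= rho E e2).
  move=> e1 e2 e2E; apply/idP/idP => [/rho_mono //|]; apply: contraLR => h.
  by rewrite -ltnNge; exact: rho_strict e2E h.
have splitH : forall x y, x != y -> exists p a b s s',
    [/\ P tcon' (f x) = p ++ a :: s, P tcon' (f y) = p ++ b :: s', a != b & p != [::]].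
  move=> x y xy.
  case: (seq_split (P tcon' (f x)) (P tcon' (f y)))
    => [[w Ew]|[[w Ew]|[p [a [b [s [s' [Ex Ey ab]]]]]]]].
  - exfalso; case: w Ew => [|c w] Ew.
      by move: Ew; rewrite cats0 => /(P_inj tsym) /eqP; rewrite eq_sym (negbTE (fne _ _ xy)).
    have [q Eq] := P_rcons tsym tcon' (f x).
    move: Ew; rewrite Eq cat_rcons => /(internal_nonleaf tsym) /(_ (fun _ => hr erefl)).
    by rewrite ltnNge lfx.
  - exfalso; case: w Ew => [|c w] Ew.
      by move: Ew; rewrite cats0 => /(P_inj tsym) /eqP; rewrite (negbTE (fne _ _ xy)).
    have [q Eq] := P_rcons tsym tcon' (f y).
    move: Ew; rewrite Eq cat_rcons => /(internal_nonleaf tsym) /(_ (fun _ => hr erefl)).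
    by rewrite ltnNge lfx.
  exists p, a, b, s, s'; split => //; apply/eqP => p0.
  move: Ex Ey; rewrite p0 /=; have [h1 ->] := P_head tsym tcon' (f x).
  have [h2 ->] := P_head tsym tcon' (f y).
  by case=> ea _ [eb _]; rewrite -ea -eb eqxx in ab.
have ord : forall x y p a b s s', P tcon' (f x) = p ++ a :: s -> P tcon' (f y) = p ++ b :: s' ->
    p != [::] -> kap a < kap b ->
    (dist_le t k (f x) (f y) <-> forall i, lexle (L x i) (Rr y i) && lexle (L y i) (Rr x i)).
  move=> x y p a b s s' Ex Ey pn ab.
  have lfs : size s' = 0 -> size s = 0.
    move=> /size0nil s'0.
    have fyb : f y = b by have := P_last tsym tcon' (f y); rewrite Ey s'0 last_cat.
    have bl : kap b < #|V| by rewrite /kap -fyb lfx.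
    have al := kapleaf a (ltn_trans ab bl).
    case: s Ex => // c s'' Ex; exfalso.
    move: al; rewrite leqNgt => /negP; apply.
    by apply: (internal_nonleaf tsym Ex) => _; apply: hr.
  have kc := @keys_core N k (map kap p) (kap a) (kap b) (map kap s) (map kap s') k2.
  have := keyN x; have := keyN y; rewrite /key Ex Ey !map_cat /= => hy hx.
  have p0 : 0 < size (map kap p) by rewrite size_map lt0n size_eq0.
  have lfs' : size (map kap s') = 0 -> size (map kap s) = 0 by rewrite !size_map.
  move: kc => /(_ p0 hx hy ab lfs'); rewrite !size_map => kc.
  have dk : dist_le t k (f x) (f y) <-> (size s).+1 + (size s').+1 <= k.
    split.
      case=> q [pq lq sq]; have := walk_lb tsym tirr tcon' tacyc pq.
      have abn : a != b by apply/eqP => e; move: ab; rewrite e ltnn.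
      rewrite lq Ex Ey (lcp_cat _ _ _ abn) !size_cat /=.
      set sp := size p; lia.
    move=> hk; apply: (distle_mono hk).
    have h1 := distle_sym tsym (dist_down tsym Ex pn).
    exact: (distle_trans h1 (dist_down tsym Ey pn)).
  rewrite dk kc /L /Rr /key Ex Ey !map_cat /=; split => h i; exact: h.
have pairH : forall x y, x != y ->
    (dist_le t k (f x) (f y) <-> forall i, lexle (L x i) (Rr y i) && lexle (L y i) (Rr x i)).
  move=> x y xy; have [p [a [b [s [s' [Ex Ey ab pn]]]]]] := splitH x y xy.
  case: (ltngtP (kap a) (kap b)) => h; first exact: ord Ex Ey pn h.
    have := ord y x p b a s' s Ey Ex pn h; split.
      by move/(distle_sym tsym)/H => hh i; rewrite andbC.
    by move=> hh; apply/(distle_sym tsym)/H => i; rewrite andbC.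
  by move/kapinj/eqP: h; rewrite (negbTE ab).
have hle : forall x i, (INR (rho E (L x i)) <= INR (rho E (Rr x i)))%R.
  move=> x i /=; apply: le_INR; apply/leP; rewrite -rhoE //.
  by rewrite /L /Rr /Tk; apply: lexle_take_sent; exact: keyN.
exists k.-1; split; first lia.
exists (fun x i => (INR (rho E (L x i)), INR (rho E (Rr x i)))); split; first exact: hle.
move=> x y xy; rewrite (gdist _ _ xy).
have xy' : x != y by apply/eqP.
have hb := @box_iff k.-1 (fun i => INR (rho E (L x i))) (fun i => INR (rho E (Rr x i)))
  (fun i => INR (rho E (L y i))) (fun i => INR (rho E (Rr y i))) (hle x) (hle y).
split.
  move/(pairH _ _ xy') => h; apply: (proj2 hb) => i /=.
  have /andP[h1 h2] := h i; split; apply: le_INR; apply/leP; rewrite -rhoE //.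
move=> hp; apply/(pairH _ _ xy') => i; have [h1 h2] := proj1 hb hp i.
by rewrite !rhoE //; apply/andP; split; apply/leP; apply: INR_le.
Qed.
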